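(* Let $R$ be a commutative Noetherian ring with unity, $\lambda$ a length function on $R$-modules, $S=R[x_1,\dots,x_k]$, $N$ an $S$-module and $V_0\le N$ an $R$-submodule which is finitely generated as an $R$-module and satisfies $\lambda(V_0)<\infty$. Let $G_{V_0}(t)=\sum_{n\in\mathbb{N}}\lambda(S_nV_0)t^n$. Then each $\lambda(S_nV_0)$ is finite, and there exists a polynomial $p(t)\in\mathbb{R}[t]$ such that \[G_{V_0}(t)=\frac{p(t)}{(1-t)^{k+1}}.\]
   Context: A length function on $R$-modules is a function $\lambda$ from $R$-modules to $\mathbb{R}_{\ge0}\cup\{\infty\}$ with $\lambda(0)=0$, invariant under isomorphism, additive on short exact sequences, and with $\lambda(M)=\sup\{\lambda(M'):M'\le M$ finitely generated$\}$. $S_n$ is the $R$-module of polynomials in $S$ of total degree at most $n$, and $S_nV_0$ is the $R$-submodule of $N$ generated by the products $pv$, $p\in S_n$, $v\in V_0$. *)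

(* Defs.v *)
From HB Require Import structures.
From mathcomp Require Import all_boot all_order all_algebra.
From mathcomp Require Import mpoly.
From mathcomp Require Import reals constructive_ereal.
Set Implicit Arguments. Unset Strict Implicit. Unset Printing Implicit Defensive.
Import Order.TTheory GRing.Theory Num.Theory.
Local Open Scope ring_scope.

Section Submodules.
Variables (R : pzRingType) (M : lmodType R).

Definition submodule (A : M -> Prop) : Prop :=
  [/\ A 0, (forall x y, A x -> A y -> A (x + y)) &
      (forall (r : R) x, A x -> A (r *: x))].

Definition rspan (G : M -> Prop) : M -> Prop :=
  fun x => exists (m : nat) (c : 'I_m -> R) (g : 'I_m -> M),
      (forall i, G (g i)) /\ x = \sum_(i < m) c i *: g i.

Definition fin_gen (A : M -> Prop) : Prop :=
  exists (m : nat) (g : 'I_m -> M),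
    forall x, A x <-> exists c : 'I_m -> R, x = \sum_(i < m) c i *: g i.

End Submodules.

Definition noetherian (R : comNzRingType) : Prop :=
  forall I : R^o -> Prop, submodule I -> fin_gen I.

(* We encode it on submodules: [lam M A] is lambda of the R-module A, where
   A is an R-submodule of the R-module M (lambda(M) itself is [lam M setT]).
   Short exact sequences 0 -> A' -> A -> A'' -> 0 are given by linear maps
   f : M' -> M, g : M -> M'' restricting to an exact sequence on A', A, A''. *)
Section Length.
Variables (RR : realType) (R : comNzRingType).

Definition is_length_function
    (lam : forall M : lmodType R, (M -> Prop) -> \bar RR) : Prop :=
  [/\
      (forall (M : lmodType R) (A : M -> Prop), submodule A -> (0 <= lam M A)%E),
      (forall M : lmodType R, lam M (fun x => x = 0) = 0%E),
      (forall (M M' : lmodType R) (f : {linear M -> M'}) (A : M -> Prop)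
              (A' : M' -> Prop),
          submodule A -> submodule A' ->
          (forall x y, A x -> A y -> f x = f y -> x = y) ->
          (forall y, A' y <-> exists2 x, A x & y = f x) ->
          lam M' A' = lam M A),
      (forall (M' M M'' : lmodType R) (f : {linear M' -> M}) (g : {linear M -> M''})
              (A' : M' -> Prop) (A : M -> Prop) (A'' : M'' -> Prop),
          submodule A' -> submodule A -> submodule A'' ->
          (forall x, A' x -> A (f x)) ->
          (forall x y, A' x -> A' y -> f x = f y -> x = y) ->
          (forall y, A'' y <-> exists2 x, A x & y = g x) ->
          (forall y, (A y /\ g y = 0) <-> exists2 x, A' x & y = f x) ->
          lam M A = (lam M' A' + lam M'' A'')%E) &
      (forall (M : lmodType R) (A : M -> Prop), submodule A ->
          (forall B, submodule B -> fin_gen B -> (forall x, B x -> A x) ->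
             (lam M B <= lam M A)%E) /\
          (forall e : \bar RR,
             (forall B, submodule B -> fin_gen B -> (forall x, B x -> A x) ->
                (lam M B <= e)%E) -> (lam M A <= e)%E))].

End Length.

Section Restr.
Variables (R : comNzRingType) (k : nat) (N : lmodType ({mpoly R[k]})).

Definition restr : Type := N.
HB.instance Definition _ := GRing.Zmodule.on restr.

Definition restr_scale (r : R) (v : restr) : restr := (mpolyC k r) *: (v : N).

Lemma restr_scaleA a b (v : restr) :
  restr_scale a (restr_scale b v) = restr_scale (a * b) v.
Proof. by rewrite /restr_scale scalerA rmorphM. Qed.

Lemma restr_scale1 : left_id 1 restr_scale.
Proof. by move=> v; rewrite /restr_scale rmorph1 scale1r. Qed.

Lemma restr_scaleDr : right_distributive restr_scale +%R.
Proof. by move=> a u v; rewrite /restr_scale scalerDr. Qed.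

Lemma restr_scaleDl (v : restr) :
  {morph restr_scale^~ v : a b / a + b}.
Proof. by move=> a b; rewrite /restr_scale rmorphD scalerDl. Qed.

HB.instance Definition _ := GRing.Zmodule_isLmodule.Build R restr
  restr_scaleA restr_scale1 restr_scaleDr restr_scaleDl.

End Restr.

Definition deg_le (R : comNzRingType) (k : nat) (p : {mpoly R[k]}) (n : nat) : Prop :=
  forall m : 'X_{1..k}, mcoeff m p != 0 -> (mdeg m <= n)%N.

Definition SnV (R : comNzRingType) (k : nat) (N : lmodType ({mpoly R[k]}))
    (n : nat) (V0 : restr N -> Prop) : restr N -> Prop :=
  rspan (fun y : restr N =>
    exists (p : {mpoly R[k]}) (v : restr N),
      [/\ deg_le p n, V0 v & y = (p *: (v : N) : restr N)]).

Definition series_mul (RR : ringType) (a b : nat -> RR) : nat -> RR :=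
  fun n => \sum_(i < n.+1) a i * b (n - i)%N.

(* Equality of formal power series  sum_n a_n t^n = p(t) / q(t)  in RR[[t]],
   for q with invertible constant term: it means  (sum_n a_n t^n) * q = p. *)
Definition series_eq_frac (RR : ringType) (a : nat -> RR) (p q : {poly RR}) : Prop :=
  series_mul a (fun n => q`_n) = (fun n => p`_n).

(* Main.v *)
Require Import Defs.
From HB Require Import structures.
From mathcomp Require Import all_boot all_order all_algebra.
From mathcomp Require Import mpoly.
From mathcomp Require Import reals constructive_ereal.
From Stdlib Require Import ClassicalEpsilon FunctionalExtensionality.
From mathcomp Require Import zify ring.
Import Order.TTheory GRing.Theory Num.Theory.


Set Implicit Arguments. Unset Strict Implicit. Unset Printing Implicit Defensive.
Local Open Scope ring_scope.
Section ACC.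
Variables (T : Type) (le : T -> T -> Prop).
Hypothesis le_refl : forall x, le x x.
Hypothesis le_trans : forall x y z, le x y -> le y z -> le x z.

Definition accP (valid : T -> Prop) := forall s : nat -> T,
  (forall n, valid (s n)) -> (forall n, le (s n) (s n.+1)) ->
  exists N, forall n, (N <= n)%N -> le (s n) (s N).

Lemma chain_mono (s : nat -> T) : (forall n, le (s n) (s n.+1)) ->
  forall a b, (a <= b)%N -> le (s a) (s b).
Proof.
move=> hs a b; elim: b => [|b IH]; first by rewrite leqn0 => /eqP->.
rewrite leq_eqVlt => /orP[/eqP->//|]; rewrite ltnS => /IH h.
exact: le_trans h (hs b).
Qed.

Definition leS (u w : nat -> T) := forall t, le (u t) (w t).
Definition validS (valid : T -> Prop) (u : nat -> T) :=
  (forall t, valid (u t)) /\ (forall t, le (u t) (u t.+1)).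

Lemma acc_seq valid : accP valid ->
  forall s : nat -> nat -> T, (forall n, validS valid (s n)) ->
  (forall n, leS (s n) (s n.+1)) ->
  exists N, forall n, (N <= n)%N -> leS (s n) (s N).
Proof.
move=> acc F vF cF.
have ex_t : forall i, exists t, forall t', (t <= t')%N -> le (F i t') (F i t).
  by move=> i; apply: acc; case: (vF i).
pose tt i := proj1_sig (constructive_indefinite_description _ (ex_t i)).
have ttP i : forall t', (tt i <= t')%N -> le (F i t') (F i (tt i)).
  exact: (proj2_sig (constructive_indefinite_description _ (ex_t i))).
have Fmono i a b : (a <= b)%N -> le (F i a) (F i b).
  by apply: chain_mono; case: (vF i).
have Fi i j t : (i <= j)%N -> le (F i t) (F j t).
  by move=> h; apply: (chain_mono (s := fun i => F i t)) => // n; apply: cF.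
have bnd i t : le (F i t) (F i (tt i)).
  case: (leqP (tt i) t) => h; first exact: ttP.
  exact: Fmono (ltnW h).
pose L i := F i (tt i).
have [i0 Hi0] : exists N, forall n, (N <= n)%N -> le (L n) (L N).
  apply: acc.
    by move=> n; case: (vF n) => h _; apply: h.
  move=> n; rewrite /L.
  apply: le_trans (Fi n n.+1 _ (leqnSn n)) _.
  exact: bnd.
have [N HN] : exists N, (i0 <= N)%N /\ forall t, (t < tt i0)%N ->
    forall i, (N <= i)%N -> le (F i t) (F N t).
  elim: (tt i0) => [|T0 [N [hN IH]]].
    by exists i0; split.
  have [M HM] : exists M, forall i, (M <= i)%N -> le (F i T0) (F M T0).
    apply: (acc (fun i => F i T0)).
      by move=> n; case: (vF n) => h _; apply: h.
    by move=> n; apply: cF.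
  exists (maxn N M); split; first by rewrite (leq_trans hN) ?leq_maxl.
  move=> t; rewrite ltnS leq_eqVlt => /orP[/eqP->|ht] i hi.
    apply: le_trans (HM i _) (Fi _ _ _ _).
      by rewrite (leq_trans _ hi) ?leq_maxr.
    by rewrite leq_maxr.
  apply: le_trans (IH t ht i _) (Fi _ _ _ _).
    by rewrite (leq_trans _ hi) ?leq_maxl.
  by rewrite leq_maxl.
exists N => i hi t.
case: HN => hN HN.
case: (ltnP t (tt i0)) => ht; first exact: HN.
apply: le_trans (Fi i0 N t hN).
apply: le_trans (bnd i t) _.
apply: le_trans (Hi0 i _) _; first by apply: leq_trans hi.
exact: Fmono.
Qed.

End ACC.


Set Implicit Arguments. Unset Strict Implicit. Unset Printing Implicit Defensive.
Local Open Scope ring_scope.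
Section ListACC.
Variables (T : Type) (le : T -> T -> Prop) (validP : T -> Prop).
Hypothesis le_refl : forall x, le x x.
Hypothesis le_trans : forall x y z, le x y -> le y z -> le x z.
Hypothesis accT : accP le validP.

Definition leL k (F G : seq nat -> T) := forall a, size a = k -> le (F a) (G a).
Definition monoL k (F : seq nat -> T) :=
  (forall a, size a = k -> validP (F a)) /\
  (forall a, size a = k -> forall i, (i < k)%N -> le (F a) (F (incr_nth a i))).

Lemma leL_refl k F : leL k F F. Proof. by move=> a _. Qed.
Lemma leL_trans k F G H : leL k F G -> leL k G H -> leL k F H.
Proof. by move=> h1 h2 a ha; apply: le_trans (h1 a ha) (h2 a ha). Qed.

Lemma accL k : accP (leL k) (monoL k).
Proof.
elim: k => [|k IH].
  move=> F vF cF.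
  have [N HN] := @accT (fun n => F n [::]) (fun n => (vF n).1 [::] erefl)
     (fun n => cF n [::] erefl).
  by exists N => n hn [|//] _; apply: HN.
move=> F vF cF.
have := @acc_seq _ (leL k) (@leL_refl k) (@leL_trans k) (monoL k) IH
   (fun i t a => F i (t :: a)).
case.
- move=> i; split.
    move=> t; split; first by move=> a ha; apply: (vF i).1; rewrite /= ha.
    move=> a ha j hj; have := (vF i).2 (t :: a) _ j.+1.
    by rewrite /= ha => /(_ erefl hj).
  move=> t a ha; have := (vF i).2 (t :: a) _ 0.
  by rewrite /= ha => /(_ erefl erefl).
- by move=> i t a ha; apply: cF; rewrite /= ha.
move=> N HN; exists N => n hn [|t a] //= [ha].
exact: HN.
Qed.

End ListACC.

Section Delta.
Variable RR : zmodType.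

Definition dlt (h : nat -> RR) n := h n - (if n is n'.+1 then h n' else 0).
Definition evz (h : nat -> RR) := exists N, forall n, (N <= n)%N -> h n = 0.
Definition Ek k (h : nat -> RR) := evz (iter k dlt h).
Definition shiftn t (h : nat -> RR) n := if (t <= n)%N then h (n - t)%N else 0.
Definition cumsum (h : nat -> RR) n := \sum_(i < n.+1) h i.

Lemma dltD h1 h2 : dlt (fun n => h1 n + h2 n) = fun n => dlt h1 n + dlt h2 n.
Proof.
apply: functional_extensionality => n; rewrite /dlt; case: n => [|n];
  rewrite ?subr0 //; rewrite opprD addrACA //.
Qed.

Lemma iter_dltD k h1 h2 :
  iter k dlt (fun n => h1 n + h2 n) = fun n => iter k dlt h1 n + iter k dlt h2 n.
Proof. by elim: k => [//|k IH]; rewrite !iterS IH dltD. Qed.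

Lemma dlt0 : dlt (fun _ => 0) = fun _ => 0.
Proof. by apply: functional_extensionality => -[|n]; rewrite /dlt subr0. Qed.

Lemma iter_dlt0 k : iter k dlt (fun _ => 0) = fun _ => 0.
Proof. by elim: k => [//|k IH]; rewrite iterS IH dlt0. Qed.

Lemma EkD k h1 h2 : Ek k h1 -> Ek k h2 -> Ek k (fun n => h1 n + h2 n).
Proof.
rewrite /Ek iter_dltD => -[N1 H1] [N2 H2]; exists (maxn N1 N2) => n hn.
rewrite H1 ?H2 ?addr0 //; apply: leq_trans hn; by rewrite ?leq_maxl ?leq_maxr.
Qed.

Lemma Ek0 k : Ek k (fun _ => 0).
Proof. by rewrite /Ek iter_dlt0; exists 0%N. Qed.

Lemma Ek_sum k m (H : nat -> nat -> RR) : (forall t, (t < m)%N -> Ek k (H t)) ->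
  Ek k (fun n => \sum_(t < m) H t n).
Proof.
elim: m => [|m IH] hH.
  have -> : (fun n => \sum_(t < 0) H t n) = fun _ => 0.
    by apply: functional_extensionality => n; rewrite big_ord0.
  exact: Ek0.
have -> : (fun n => \sum_(t < m.+1) H t n) =
          (fun n => (\sum_(t < m) H t n) + H m n).
  by apply: functional_extensionality => n; rewrite big_ord_recr.
apply: EkD; last exact: hH.
by apply: IH => t ht; apply: hH; rewrite ltnS ltnW.
Qed.

Lemma Ek_ext k h1 h2 : (forall n, h1 n = h2 n) -> Ek k h1 -> Ek k h2.
Proof. by move=> e; have -> : h1 = h2 by apply: functional_extensionality. Qed.

Lemma dlt_shift t h : dlt (shiftn t h) = shiftn t (dlt h).
Proof.
apply: functional_extensionality => n; rewrite /dlt /shiftn.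
case: n => [|n].
  by case: t => [|t] //=; rewrite subr0.
case: (ltngtP t n.+1) => h1.
- have h2 : (t <= n)%N by rewrite -ltnS.
  by rewrite h2 subSn.
- by rewrite leqNgt (ltn_trans (ltnSn n) h1) subr0.
- by rewrite h1 subnn ltnn subr0.
Qed.

Lemma Ek_shift k t h : Ek k h -> Ek k (shiftn t h).
Proof.
have e : iter k dlt (shiftn t h) = shiftn t (iter k dlt h).
  by elim: k => [//|k IH]; rewrite !iterS IH dlt_shift.
rewrite /Ek e => -[N HN]; exists (N + t)%N => n hn.
rewrite /shiftn; case: ifP => // _; apply: HN.
lia.
Qed.

Lemma Ek_S k h : Ek k h -> Ek k.+1 h.
Proof.
rewrite /Ek iterS => -[N HN]; exists N.+1 => n hn; rewrite /dlt.
case: n hn => [//|n] hn; rewrite !HN ?subr0 //; exact: ltnW.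
Qed.

Lemma dlt_cumsum h : dlt (cumsum h) = h.
Proof.
apply: functional_extensionality => -[|n]; rewrite /dlt /cumsum.
  by rewrite big_ord1 subr0.
by rewrite big_ord_recr /= addrAC subrr add0r.
Qed.

Lemma Ek_cumsum k h : Ek k h -> Ek k.+1 (cumsum h).
Proof. by rewrite /Ek iterSr dlt_cumsum. Qed.

End Delta.


Set Implicit Arguments. Unset Strict Implicit. Unset Printing Implicit Defensive.
Local Open Scope nat_scope.
Fixpoint lists (k n : nat) : seq (seq nat) :=
  match k with
  | 0 => if n == 0%N then [:: [::]] else [::]
  | k'.+1 => flatten [seq [seq t :: a | a <- lists k' (n - t)%N] | t : nat <- iota 0 n.+1]
  end.

Lemma lists_S k n : lists k.+1 n =
  flatten [seq [seq t :: a | a <- lists k (n - t)%N] | t : nat <- iota 0 n.+1].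
Proof. by []. Qed.

Lemma mem_lists k n a : (a \in lists k n) = (size a == k) && (sumn a == n).
Proof.
elim: k n a => [|k IH] n a.
  rewrite /=; case: a => [|x a] /=; case: n => [|n] //=; by rewrite ?in_cons ?in_nil.
rewrite lists_S; apply/flattenP/andP.
  case=> s /mapP[t]; rewrite mem_iota add0n ltnS => ht -> /mapP[b].
  rewrite IH => /andP[/eqP hs /eqP hsum] ->; split => //=; first by rewrite hs.
  by rewrite hsum subnKC.
case: a => [|t a]; first by case=> /eqP. 
case=> /eqP[hs] /eqP hsum.
exists [seq t :: b | b <- lists k (n - t)].
  by apply/mapP; exists t => //; rewrite mem_iota add0n ltnS -hsum /= leq_addr.
apply/mapP; exists a => //; by rewrite IH hs -hsum /= addKn !eqxx.
Qed.

Lemma uniq_lists k n : uniq (lists k n).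
Proof.
elim: k n => [|k IH] n; first by case: n.
rewrite lists_S.
elim: (iota 0 n.+1) (iota_uniq 0 n.+1) => [//|t s IHs] /= /andP[ts us].
rewrite cat_uniq IHs // andbT map_inj_uniq ?IH //; last by move=> x y [].
apply/hasPn => x /flattenP[s' /mapP[t' t's ->]] /mapP[b _ ->].
apply/mapP => -[b' _ [e _]]; move: ts; by rewrite -e t's.
Qed.

Local Open Scope ring_scope.
Section CL.
Variable RR : zmodType.

Definition hs k (c : seq nat -> RR) n := \sum_(a <- lists k n) c a.

Lemma hs_S k c n :
  hs k.+1 c n = \sum_(t < n.+1) hs k (fun a => c ((t : nat) :: a)) (n - t).
Proof.
rewrite /hs lists_S big_flatten big_map -(big_mkord xpredT (fun t : nat => \sum_(a <- lists k (n - t)%N) c (t :: a))).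
by rewrite /index_iota subn0; apply: eq_bigr => t _; rewrite big_map.
Qed.

Lemma hs0 c n : hs 0 c n = if n == 0%N then c [::] else 0.
Proof. by rewrite /hs /=; case: n => [|n]; rewrite ?big_seq1 ?big_nil. Qed.

Variables (T : Type) (le : T -> T -> Prop) (validP : T -> Prop).
Hypothesis le_refl : forall x, le x x.
Hypothesis le_trans : forall x y z, le x y -> le y z -> le x z.
Hypothesis accT : accP le validP.

Lemma hs_split (H : nat -> nat -> RR) t0 n :
  (forall t, (t0 <= t)%N -> H t = H t0) ->
  \sum_(t < n.+1) H t (n - t)%N =
  \sum_(t < t0) shiftn t (H t) n + shiftn t0 (cumsum (H t0)) n.
Proof.
move=> hH; rewrite /shiftn.
case: (leqP t0 n) => ht0.
  rewrite -(big_mkord xpredT (fun t => H t (n - t)%N)).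
  rewrite (@big_cat_nat _ _ _ t0) //=; last exact: leqW.
  rewrite big_mkord; congr (_ + _).
    by apply: eq_bigr => i _; rewrite (leq_trans (ltnW (ltn_ord i)) ht0).
  rewrite /cumsum -(big_mkord xpredT (H t0)) big_nat_rev /=.
  rewrite -{1}(add0n t0) big_addn subSn //.
  apply: eq_big_nat => i /andP[_ hi]; rewrite hH ?leq_addl //.
  - by f_equal; lia.
  - lia.
rewrite addr0.
rewrite -(big_mkord xpredT (fun t => H t (n - t)%N)).
rewrite -(big_mkord xpredT (fun t => if (t <= n)%N then H t (n - t)%N else 0)).
rewrite (@big_cat_nat _ _ _ n.+1 0 t0) //=.
rewrite [X in _ = _ + X]big1_seq ?addr0; last first.
  by move=> i /andP[_]; rewrite mem_iota => /andP[hi _]; rewrite leqNgt hi.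
by apply: eq_big_nat => i /andP[_]; rewrite ltnS => ->.
Qed.

Lemma CL k : forall (c : seq nat -> RR) (f : seq nat -> T),
  (forall a, size a = k -> validP (f a)) ->
  (forall a, size a = k -> forall i, (i < k)%N -> le (f a) (f (incr_nth a i))) ->
  (forall a, size a = k -> forall i, (i < k)%N ->
     le (f (incr_nth a i)) (f a) -> c a = c (incr_nth a i)) ->
  Ek k (hs k c).
Proof.
elim: k => [|k IH] c f vf mf cf.
  by exists 1%N => -[|n] //= _; rewrite hs0.
pose G t := fun a => f (t :: a).
have [t0 Ht0] : exists N, forall n, (N <= n)%N -> leL le k (G n) (G N).
  apply: (@accL _ le validP le_refl le_trans accT k G).
    move=> t; split; first by move=> a ha; apply: vf; rewrite /= ha.
    move=> a ha i hi; have := mf (t :: a) _ i.+1; rewrite /= ha.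
    by move/(_ erefl hi).
  move=> t a ha; have := mf (t :: a) _ 0; rewrite /= ha.
  by move/(_ erefl erefl).
have Gmono : forall a, size a = k -> forall t1 t2, (t1 <= t2)%N -> le (G t1 a) (G t2 a).
  move=> a ha t1 t2; apply: (@chain_mono _ le le_refl le_trans (fun t => G t a)).
  move=> t; have := mf (t :: a) _ 0; rewrite /= ha.
  by move/(_ erefl erefl).
have ceq : forall a, size a = k -> forall t, (t0 <= t)%N -> c (t :: a) = c (t0 :: a).
  move=> a ha; elim=> [|t IHt]; first by rewrite leqn0 => /eqP->.
  rewrite leq_eqVlt => /orP[/eqP<-//|]; rewrite ltnS => ht.
  rewrite -IHt //; symmetry.
  have := cf (t :: a) _ 0; rewrite /= ha => /(_ erefl erefl); apply.
  apply: le_trans (Ht0 t.+1 (leqW ht) a ha) _.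
  exact: Gmono.
pose H t := hs k (fun a => c (t :: a)).
have HE : forall t, Ek k (H t).
  move=> t; apply: (IH _ (G t)).
  - by move=> a ha; apply: vf; rewrite /= ha.
  - move=> a ha i hi; have := mf (t :: a) _ i.+1; rewrite /= ha.
    by move/(_ erefl hi).
  - move=> a ha i hi; have := cf (t :: a) _ i.+1; rewrite /= ha.
    by move/(_ erefl hi).
have Hst : forall t, (t0 <= t)%N -> H t = H t0.
  move=> t ht; apply: functional_extensionality => n; rewrite /H /hs.
  apply: eq_big_seq => a; rewrite mem_lists => /andP[/eqP ha _].
  exact: ceq.
apply: (@Ek_ext _ _ (fun n => \sum_(t < t0) shiftn t (H t) n + shiftn t0 (cumsum (H t0)) n)).
  by move=> n; rewrite hs_S (hs_split _ Hst).
apply: EkD.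
  apply: (@Ek_sum _ _ t0 (fun t => shiftn t (H t))) => t _; apply: Ek_shift; exact: Ek_S.
apply: Ek_shift; exact: Ek_cumsum.
Qed.

End CL.


Set Implicit Arguments. Unset Strict Implicit. Unset Printing Implicit Defensive.
Local Open Scope ring_scope.
Section LinMaps.
Variables (R : comNzRingType) (M : lmodType R).
Definition inlz (x : M) : (M * M)%type := (x, 0).
Lemma inlz_lin : linear inlz.
Proof. move=> a u v; rewrite /inlz; apply: injective_projections => //=.
by rewrite scaler0 addr0. Qed.
HB.instance Definition _ := GRing.isLinear.Build _ _ _ _ inlz inlz_lin.
Definition sndl (x : (M * M)%type) : M := x.2.
Lemma sndl_lin : linear sndl. Proof. by []. Qed.
HB.instance Definition _ := GRing.isLinear.Build _ _ _ _ sndl sndl_lin.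
Definition pdiag (x : M) : (M * M)%type := (x, - x).
Lemma pdiag_lin : linear pdiag.
Proof. move=> a u v; rewrite /pdiag; apply: injective_projections => //=.
by rewrite opprD scalerN. Qed.
HB.instance Definition _ := GRing.isLinear.Build _ _ _ _ pdiag pdiag_lin.
Definition padd (x : (M * M)%type) : M := x.1 + x.2.
Lemma padd_lin : linear padd.
Proof. move=> a [u1 u2] [v1 v2]; rewrite /padd /= scalerDr addrACA //. Qed.
HB.instance Definition _ := GRing.isLinear.Build _ _ _ _ padd padd_lin.
End LinMaps.

Section SubTools.
Variables (R : comNzRingType) (M : lmodType R).
Implicit Types A B : M -> Prop.

Lemma subI A B : submodule A -> submodule B -> submodule (fun x => A x /\ B x).
Proof.
move=> [A0 AD AZ] [B0 BD BZ]; split => //.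
  by move=> x y [] ? ? [] ? ?; split; auto.
by move=> r x [] ? ?; split; auto.
Qed.

Lemma subS A B : submodule A -> submodule B ->
  submodule (fun x => exists a b, [/\ A a, B b & x = a + b]).
Proof.
move=> [A0 AD AZ] [B0 BD BZ]; split.
- by exists 0, 0; rewrite addr0.
- move=> x y [a [b [Aa Bb ->]]] [a' [b' [Aa' Bb' ->]]].
  by exists (a + a'), (b + b'); split; auto; rewrite addrACA.
- move=> r x [a [b [Aa Bb ->]]]; exists (r *: a), (r *: b); split; auto.
  by rewrite scalerDr.
Qed.

Lemma sub0 : submodule (fun x : M => x = 0).
Proof. by split => // [x y -> ->|r x ->]; rewrite ?addr0 ?scaler0. Qed.

Lemma subker (M' : lmodType R) (f : {linear M -> M'}) A : submodule A ->
  submodule (fun x => A x /\ f x = 0).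
Proof.
move=> [A0 AD AZ]; split; first by rewrite linear0.
  by move=> x y [] ? e1 [] ? e2; split; auto; rewrite linearD e1 e2 addr0.
by move=> r x [] ? e; split; auto; rewrite linearZZ e scaler0.
Qed.

Lemma subimg (M' : lmodType R) (f : {linear M -> M'}) A : submodule A ->
  submodule (fun y => exists2 x, A x & y = f x).
Proof.
move=> [A0 AD AZ]; split; first by exists 0; rewrite ?linear0.
  by move=> _ _ [x Ax ->] [y Ay ->]; exists (x + y); rewrite ?linearD; auto.
by move=> r _ [x Ax ->]; exists (r *: x); rewrite ?linearZZ; auto.
Qed.

Lemma subprod A B : submodule A -> submodule B ->
  submodule (fun x : (M * M)%type => A x.1 /\ B x.2).
Proof.
move=> [A0 AD AZ] [B0 BD BZ]; split => //.
  by move=> [x1 x2] [y1 y2] /= [] ? ? [] ? ?; split; auto.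
by move=> r [x1 x2] /= [] ? ?; split; auto.
Qed.

End SubTools.

Unset Implicit Arguments.
Section LamTools.
Variables (RR : realType) (R : comNzRingType)
  (lam : forall M : lmodType R, (M -> Prop) -> \bar RR).
Hypothesis hL : is_length_function lam.

Lemma lam_ge0 (M : lmodType R) (A : M -> Prop) : submodule A -> (0 <= lam M A)%E.
Proof. by case: hL => h _ _ _ _; apply: h. Qed.

Lemma lam_ext (M : lmodType R) (A B : M -> Prop) : submodule A -> submodule B ->
  (forall x, A x <-> B x) -> lam M A = lam M B.
Proof.
case: hL => _ _ hiso _ _ sA sB e; symmetry.
apply: (hiso M M idfun A B sA sB) => // y; split.
  by move/e => By; exists y.
by case=> x Ax ->; apply/e.
Qed.

Lemma lam0 (M : lmodType R) (A : M -> Prop) : submodule A ->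
  (forall x, A x <-> x = 0) -> lam M A = 0%E.
Proof.
move=> sA e; case: hL => _ h0 _ _ _; rewrite -(h0 M).
by apply: lam_ext => //; exact: sub0.
Qed.

Lemma lam_mono (M : lmodType R) (A B : M -> Prop) : submodule A -> submodule B ->
  (forall x, A x -> B x) -> (lam M A <= lam M B)%E.
Proof.
case: hL => _ _ _ _ hsup sA sB AB.
apply: (hsup M A sA).2 => C sC fC CA.
by apply: (hsup M B sB).1 => // x /CA /AB.
Qed.

Lemma lam_ker (M M' : lmodType R) (f : {linear M -> M'}) (A : M -> Prop) :
  submodule A ->
  lam M A = (lam M (fun x => A x /\ f x = 0%R) + lam M' (fun y => exists2 x, A x & y = f x))%E.
Proof.
case: hL => _ _ _ hadd _ sA.
apply: (hadd M M M' idfun f) => //.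
- exact: subker.
- exact: subimg.
- by move=> x [].
- move=> y; split; first by case=> Ay fy; exists y.
  by case=> x [Ax fx] ->.
Qed.

Lemma lam_prod (M : lmodType R) (A B : M -> Prop) : submodule A -> submodule B ->
  lam _ (fun x : (M * M)%type => A x.1 /\ B x.2) = (lam M A + lam M B)%E.
Proof.
case: hL => _ _ _ hadd _ sA sB.
apply: (hadd M (M * M)%type M (@inlz _ M) (@sndl _ M)) => //.
- exact: subprod.
- by move=> x Ax; split => //=; case: sB.
- by move=> x y _ _ [].
- move=> y; split; first by move=> By; exists (0, y) => //; split => //; case: sA.
  by case=> -[x1 x2] [_ ?] ->.
- move=> [y1 y2]; split.
    by case=> -[/= Ay1 _] e; exists y1 => //; rewrite /inlz; congr (_, _).
  by case=> x Ax [-> ->]; split => //; case: sB.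
Qed.

Lemma lam_modular (M : lmodType R) (A B : M -> Prop) : submodule A -> submodule B ->
  (lam M A + lam M B)%E =
  (lam M (fun x => exists a b, [/\ A a, B b & x = (a + b)%R]) +
   lam M (fun x => A x /\ B x))%E.
Proof.
move=> sA sB; rewrite -lam_prod //.
case: hL => _ _ _ hadd _.
rewrite addeC.
apply: (hadd M (M * M)%type M (@pdiag _ M) (@padd _ M)).
- exact: subI.
- exact: subprod.
- exact: subS.
- by move=> x [Ax Bx] /=; split => //; case: sB => _ _ /(_ (-1) x Bx); rewrite scaleN1r.
- by move=> x y _ _ [].
- move=> y; split.
    by case=> a [b [Aa Bb ->]]; exists (a, b).
  by case=> -[a b] /= [Aa Bb] ->; exists a, b.
- move=> [a b]; split.
    case=> /= [[Aa Bb] e].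
    have ea : a = - b by apply/eqP; rewrite -addr_eq0; apply/eqP; exact: e.
    exists a; last by rewrite /pdiag ea opprK.
    split => //; rewrite ea.
    by case: sB => _ _ /(_ (-1) b Bb); rewrite scaleN1r.
  by case=> x [Ax Bx] [-> ->]; split; [split => //=; case: sB => _ _ /(_ (-1) x Bx); rewrite scaleN1r | rewrite /padd /=; exact: subrr].
Qed.

End LamTools.
Set Implicit Arguments.


Set Implicit Arguments. Unset Strict Implicit. Unset Printing Implicit Defensive.
Local Open Scope ring_scope.
Section Rspan.
Variables (R : comNzRingType) (M : lmodType R).
Implicit Types (G H : M -> Prop).

Lemma rspanP G x : rspan G x <->
  exists s : seq (R * M), (forall p, p \in s -> G p.2) /\ x = \sum_(p <- s) p.1 *: p.2.
Proof.
split.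
  case=> m [c [g [Gg ->]]]; exists [seq (c i, g i) | i <- enum 'I_m]; split.
    by move=> p /mapP[i _ ->]; apply: Gg.
  by rewrite big_map big_enum.
case=> s [Gs ->]; exists (size s), (fun i => (nth (0, 0) s i).1),
  (fun i => (nth (0, 0) s i).2); split.
  by move=> i; apply: Gs; apply: mem_nth.
by rewrite (big_nth (0, 0)) big_mkord.
Qed.

Lemma rspan_sub G : submodule (rspan G).
Proof.
split.
- by apply/rspanP; exists [::]; split; rewrite ?big_nil.
- move=> x y /rspanP[s1 [G1 ->]] /rspanP[s2 [G2 ->]]; apply/rspanP.
  exists (s1 ++ s2); rewrite big_cat; split => // p; rewrite mem_cat => /orP[]; auto.
- move=> r x /rspanP[s [Gs ->]]; apply/rspanP.
  exists [seq (r * p.1, p.2) | p <- s]; split.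
    by move=> p /mapP[q qs ->]; exact: (Gs q qs).
  by rewrite big_map scaler_sumr; apply: eq_bigr => p _; rewrite scalerA.
Qed.

Lemma rspan_gen G y : G y -> rspan G y.
Proof.
move=> Gy; apply/rspanP; exists [:: (1, y)]; split; last by rewrite big_seq1 scale1r.
by move=> p; rewrite inE => /eqP->.
Qed.

Lemma rspan_min G (B : M -> Prop) : submodule B -> (forall y, G y -> B y) ->
  forall x, rspan G x -> B x.
Proof.
move=> [B0 BD BZ] GB x /rspanP[s [Gs ->]].
elim: s Gs => [|p s IH] Gs; first by rewrite big_nil.
rewrite big_cons; apply: BD; first by apply: BZ; apply: GB; apply: Gs; rewrite inE eqxx.
by apply: IH => q qs; apply: Gs; rewrite inE qs orbT.
Qed.

Lemma rspan_mono G H : (forall y, G y -> H y) -> forall x, rspan G x -> rspan H x.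
Proof.
move=> GH; apply: rspan_min; first exact: rspan_sub.
by move=> y /GH; apply: rspan_gen.
Qed.

Lemma rspan_ext G H : (forall y, G y <-> H y) -> forall x, rspan G x <-> rspan H x.
Proof. by move=> e x; split; apply: rspan_mono => y /e. Qed.

Definition rline (y0 : M) := fun x : M => exists r : R, x = r *: y0.
Definition ssum (A B : M -> Prop) := fun x => exists a b, [/\ A a, B b & x = a + b].

Lemma rline_sub y0 : submodule (rline y0).
Proof.
split; first by exists 0; rewrite scale0r.
  by move=> _ _ [a ->] [b ->]; exists (a + b); rewrite scalerDl.
by move=> r _ [a ->]; exists (r * a); rewrite scalerA.
Qed.

Lemma rspan_add1 G y0 x :
  rspan (fun y => G y \/ y = y0) x <-> ssum (rspan G) (rline y0) x.
Proof.
split.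
  apply: rspan_min; first exact: subS (rspan_sub G) (rline_sub y0).
  move=> y [Gy|->].
    by exists y, 0; split; [exact: rspan_gen | exists 0; rewrite scale0r | rewrite addr0].
  exists 0, y0; split; [by case: (rspan_sub G) | by exists 1; rewrite scale1r | by rewrite add0r].
case=> a [b [Ga [r ->] ->]].
have [_ hD hZ] := rspan_sub (fun y => G y \/ y = y0).
apply: hD; first by apply: (rspan_mono _ Ga) => y; left.
by apply: hZ; apply: rspan_gen; right.
Qed.

End Rspan.

Lemma rspan_lin (R : comNzRingType) (M M' : lmodType R) (f : {linear M -> M'}) G x :
  rspan G x -> rspan (fun y => exists2 z, G z & y = f z) (f x).
Proof.
move=> /rspanP[s [Gs ->]]; apply/(@rspanP _ M').
exists [seq (p.1, f p.2) | p <- s]; split.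
  by move=> p /mapP[q qs ->]; exists q.2 => //; apply: Gs.
by rewrite linear_sum big_map; apply: eq_bigr => p _; rewrite linearZZ.
Qed.




Set Implicit Arguments. Unset Strict Implicit. Unset Printing Implicit Defensive.
Local Open Scope ring_scope.
Section XmDef.
Variables (R : comNzRingType) (k : nat) (N : lmodType {mpoly R[k]}) (b : 'X_{1..k}).

Lemma restr_scaleE (a : R) (x : restr N) :
  a *: x = (mpolyC k a *: (x : N) : restr N).
Proof. by []. Qed.

Definition Xm (x : restr N) : restr N := ('X_[b] *: (x : N) : N).

Lemma Xm_lin : linear Xm.
Proof.
move=> a u v; rewrite /Xm !restr_scaleE.
change (('X_[b] : {mpoly R[k]}) *: (mpolyC k a *: (u : N) + (v : N)) =
  mpolyC k a *: ('X_[b] *: (u : N)) + 'X_[b] *: (v : N)).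
by rewrite scalerDr !scalerA mulrC.
Qed.
HB.instance Definition _ := GRing.isLinear.Build _ _ _ _ Xm Xm_lin.
End XmDef.

Definition mk (k : nat) (a : seq nat) : 'X_{1..k} := [multinom nth 0%N a i | i < k].

Lemma mkE k a (i : 'I_k) : mk k a i = nth 0%N a i.
Proof. by rewrite /mk mnmE. Qed.

Lemma mk_val k (b : 'X_{1..k}) : mk k (val (val b)) = b.
Proof. by apply/mnmP => i; rewrite mkE -mnm_nth. Qed.

Lemma size_valm k (b : 'X_{1..k}) : size (val (val b)) = k.
Proof. by rewrite size_tuple. Qed.

Lemma mdeg_mk k a : size a = k -> mdeg (mk k a) = sumn a.
Proof.
move=> ha; rewrite mdegE.
rewrite (eq_bigr (fun i : 'I_k => nth 0%N a i)); last by move=> i _; rewrite mkE.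
rewrite -ha -(big_mkord xpredT (fun i => nth 0%N a i)) -(big_nth 0%N xpredT id).
by rewrite sumnE.
Qed.

Lemma mk_inj k a b : size a = k -> size b = k -> mk k a = mk k b -> a = b.
Proof.
move=> ha hb e; apply: (@eq_from_nth _ 0%N); first by rewrite ha hb.
move=> i; rewrite ha => hi.
by have := congr1 (fun m : 'X_{1..k} => m (Ordinal hi)) e; rewrite /= !mkE.
Qed.

Lemma mk_incr k a i (hi : (i < k)%N) :
  mk k (incr_nth a i) = (mk k a + U_(Ordinal hi))%MM.
Proof.
apply/mnmP => j; rewrite mnmDE mnm1E !mkE nth_incr_nth addnC.
by congr (_ + _)%N.
Qed.


Set Implicit Arguments. Unset Strict Implicit. Unset Printing Implicit Defensive.
Local Open Scope ring_scope.
Section Noeth.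
Variable R : comNzRingType.

Definition ileR (I J : R -> Prop) := forall r, I r -> J r.

Lemma sub_big (M : lmodType R) (B : M -> Prop) (I : Type) (r : seq I) (P : pred I) F :
  submodule B -> (forall i, P i -> B (F i)) -> B (\sum_(i <- r | P i) F i).
Proof.
move=> [B0 BD _] hF; exact: (big_ind B B0 BD).
Qed.

Lemma noeth_acc : noetherian R -> accP ileR (fun I => submodule (M := R^o) I).
Proof.
move=> hN s vs cs.
have cm : forall a b, (a <= b)%N -> ileR (s a) (s b).
  exact: (@chain_mono _ ileR (fun I r h => h) (fun I J K h1 h2 r hr => h2 r (h1 r hr)) s cs).
pose U := fun x : R^o => exists n, s n x.
have sU : submodule U.
  split.
  - by exists 0%N; case: (vs 0%N).
  - move=> x y [a ha] [b hb]; exists (maxn a b).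
    case: (vs (maxn a b)) => _ hD _; apply: hD.
      by apply: (cm a) => //; rewrite leq_maxl.
    by apply: (cm b) => //; rewrite leq_maxr.
  - move=> r x [a ha]; exists a; case: (vs a) => _ _; exact.
have [m [gen hgen]] := hN U sU.
have genU : forall i, U (gen i).
  move=> i; apply/hgen; exists (fun j => (j == i)%:R).
  rewrite (bigD1 i) //= eqxx scale1r big1 ?addr0 // => j /negbTE ->.
  by rewrite scale0r.
have [N HN] : exists N, forall i, i \in enum 'I_m -> s N (gen i).
  elim: (enum 'I_m) => [|i l [N HN]]; first by exists 0%N.
  have [a ha] := genU i.
  exists (maxn a N) => j; rewrite inE => /orP[/eqP->|/HN h].
    by apply: (cm a) => //; rewrite leq_maxl.
  by apply: (cm N) => //; rewrite leq_maxr.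
exists N => n hn x hx.
have /hgen [c ->] : U x by exists n.
apply: sub_big => // i _; case: (vs N) => _ _; apply; apply: HN.
by rewrite mem_enum.
Qed.

End Noeth.

Lemma Ek_big (RR : zmodType) k (I : Type) (r : seq I) (H : I -> nat -> RR) :
  (forall i, Ek k (H i)) -> Ek k (fun n => \sum_(i <- r) H i n).
Proof.
move=> hH; elim: r => [|i r IH].
  apply: (Ek_ext (h1 := fun _ => 0)); last exact: Ek0.
  by move=> n; rewrite big_nil.
apply: (Ek_ext (h1 := fun n => H i n + \sum_(j <- r) H j n)).
  by move=> n; rewrite big_cons.
exact: EkD.
Qed.

Unset Implicit Arguments.
Section Main.
Variables (RR : realType) (R : comNzRingType) (k : nat)
  (lam : forall M : lmodType R, (M -> Prop) -> \bar RR)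
  (N : lmodType ({mpoly R[k]})) (V0 : restr N -> Prop).
Hypotheses (hN : noetherian R) (hL : is_length_function lam) (sV0 : submodule V0)
  (finV0 : (lam _ V0 < +oo)%E).
Variables (m : nat) (g : 'I_m -> restr N).
Hypothesis hg : forall x, V0 x <-> exists c : 'I_m -> R, x = \sum_(i < m) c i *: g i.

Local Notation V := (restr N).
Let lext := lam_ext RR R lam hL.
Let lker := lam_ker RR R lam hL.
Let lmono := lam_mono RR R lam hL.
Let lge0 := lam_ge0 RR R lam hL.
Let lmod := lam_modular RR R lam hL.
Let lzero := lam0 RR R lam hL.
Definition idx := ('X_{1..k} * 'I_m)%type.

Definition ltI (s t : idx) : bool :=
  (s.1 < t.1)%O || ((s.1 == t.1) && (s.2 < t.2)%N).

Lemma ltI_irr s : ltI s s = false.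
Proof. by rewrite /ltI ltxx eqxx ltnn. Qed.

Lemma ltI_trans s t u : ltI s t -> ltI t u -> ltI s u.
Proof.
rewrite /ltI => /orP[h1|/andP[/eqP e1 h1]] /orP[h2|/andP[/eqP e2 h2]].
- by rewrite (lt_trans h1 h2).
- by rewrite -e2 h1.
- by rewrite e1 h2.
- by rewrite e1 e2 eqxx (ltn_trans h1 h2) orbT.
Qed.

Lemma ltI_total s t : s != t -> ltI s t || ltI t s.
Proof.
case: s t => [a i] [b j] /=; rewrite /ltI /= xpair_eqE negb_and => hne.
case: (ltgtP a b) => //= e; subst b.
move: hne; rewrite eqxx /=; case: (ltngtP i j) => //= e.
by rewrite (val_inj e) eqxx.
Qed.

Lemma ltI_deg s t : ltI s t -> (mdeg s.1 <= mdeg t.1)%N.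
Proof.
rewrite /ltI => /orP[h|/andP[/eqP -> _]] //.
exact: lemc_mdeg (ltW h).
Qed.

Lemma ltI_shift s t (u : 'X_{1..k}) :
  ltI (s.1 + u, s.2)%MM (t.1 + u, t.2)%MM = ltI s t.
Proof. by rewrite /ltI /= ltmc_add2l eqm_add2r. Qed.

Definition v (t : idx) : V := Xm t.1 (g t.2).

Definition spanL (s : seq idx) := rspan (fun y => exists2 t, t \in s & y = v t).
Definition Pt (t : idx) := rspan (fun y => exists2 s, ltI s t & y = v s).
Definition Rv (t : idx) := rline (v t).
Definition It (t : idx) := fun r : R => Pt t (r *: v t).
Definition cc (t : idx) : RR :=
  fine (lam _ (Rv t)) - fine (lam _ (fun x => Rv t x /\ Pt t x)).

Lemma g_V0 j : V0 (g j).
Proof.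
apply/hg; exists (fun i => (i == j)%:R).
rewrite (bigD1 j) //= eqxx scale1r big1 ?addr0 // => i /negbTE ->.
by rewrite scale0r.
Qed.

Lemma lam_line_le t : (lam _ (Rv t) <= lam _ V0)%E.
Proof.
have e : forall x, Rv t x <-> exists2 y, rline (g t.2) y & x = Xm t.1 y.
  move=> x; split.
    by case=> r ->; exists (r *: g t.2); [exists r | rewrite linearZZ].
  by case=> _ [r ->] ->; exists r; rewrite linearZZ.
rewrite (lext _ _ _ (rline_sub _) _ e); last exact: subimg (rline_sub _).
apply: le_trans (_ : (lam _ (rline (g t.2)) <= _)%E).
  rewrite [X in (_ <= X)%E](lker _ _ (@Xm _ _ N t.1 : {linear V -> V}) _ (rline_sub _)).
  apply: leeDr; apply: lge0 => //.
  exact: subker (rline_sub _).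
apply: lmono => //; first exact: rline_sub.
move=> _ [r ->]; case: sV0 => _ _; apply; exact: g_V0.
Qed.

Lemma lam_line_fin t : (lam _ (Rv t) < +oo)%E.
Proof. exact: le_lt_trans (lam_line_le t) finV0. Qed.

Lemma spanL_fin s : (lam _ (spanL s) < +oo)%E.
Proof.
elim: s => [|t s IH].
  rewrite (lzero _ _ (rspan_sub _)) ?ltry // => x; split.
    by move/rspanP=> [p [hp ->]]; case: p hp => [|q p] hp; [rewrite big_nil | have [? ] := hp q (mem_head _ _)].
  by move=> ->; case: (rspan_sub (fun y : V => exists2 t, t \in [::] & y = v t)).
have e : forall x, spanL (t :: s) x <-> ssum (spanL s) (Rv t) x.
  move=> x; apply: iff_trans (rspan_add1 (fun y => exists2 u, u \in s & y = v u) (v t) x).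
  apply: rspan_ext => y; split.
    by case=> u; rewrite inE => /orP[/eqP-> ->|us ->]; [right | left; exists u].
  by case=> [[u us ->]|->]; [exists u => //; rewrite inE us orbT | exists t => //; exact: mem_head].
rewrite (lext _ _ _ (rspan_sub _) _ e); last exact: subS (rspan_sub _) (rline_sub _).
apply: le_lt_trans (_ : (lam _ (spanL s) + lam _ (Rv t) < +oo)%E); last first.
  exact: lte_add_pinfty IH (lam_line_fin t).
rewrite (lmod _ _ _ (rspan_sub _) (rline_sub _)).
apply: leeDl; apply: lge0 => //; exact: subI (rspan_sub _) (rline_sub _).
Qed.

Lemma sub_fin (A : V -> Prop) s : submodule A -> (forall x, A x -> spanL s x) ->
  lam _ A \is a fin_num.
Proof.
move=> sA As; rewrite ge0_fin_numE; last exact: lge0.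
apply: le_lt_trans (spanL_fin s).
apply: lmono => //; exact: rspan_sub.
Qed.

Definition Mn n : seq 'X_{1..k} :=
  [seq mk k a | a <- flatten [seq lists k d | d <- iota 0 n.+1]].
Definition Dn n : seq idx := [seq (b, j) | b <- Mn n, j <- enum 'I_m].

Lemma mem_Mn n b : (b \in Mn n) = (mdeg b <= n)%N.
Proof.
apply/mapP/idP.
  case=> a /flattenP[s' /mapP[d]]; rewrite mem_iota add0n ltnS => hd -> .
  rewrite mem_lists => /andP[/eqP ha /eqP hs] ->.
  by rewrite mdeg_mk // hs.
move=> hb; exists (val (val b)); last by rewrite mk_val.
apply/flattenP; exists (lists k (mdeg b)).
  by apply/mapP; exists (mdeg b) => //; rewrite mem_iota add0n ltnS.
rewrite mem_lists size_valm eqxx /= -(mdeg_mk (size_valm b)) mk_val //.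
Qed.

Lemma uniq_Mn n : uniq (Mn n).
Proof.
rewrite map_inj_in_uniq.
  elim: (iota 0 n.+1) (iota_uniq 0 n.+1) => [//|d s IH] /= /andP[ds us].
  rewrite cat_uniq uniq_lists IH // andbT.
  apply/hasPn => a /flattenP[s' /mapP[d' d's ->]].
  rewrite !mem_lists => /andP[_ /eqP e1]; apply/negP => /andP[_ /eqP e2].
  by move: ds; rewrite -e2 e1 d's.
move=> a b /flattenP[s1 /mapP[d1 _ ->] ha] /flattenP[s2 /mapP[d2 _ ->] hb].
move: ha hb; rewrite !mem_lists => /andP[/eqP ha _] /andP[/eqP hb _].
exact: mk_inj.
Qed.

Lemma mem_Dn n t : (t \in Dn n) = (mdeg t.1 <= n)%N.
Proof.
apply/allpairsP/idP.
  by case=> -[b j] [/= hb _ ->] /=; rewrite -mem_Mn.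
by move=> h; exists t; split; rewrite ?mem_Mn ?mem_enum //; case: t {h}.
Qed.

Lemma uniq_Dn n : uniq (Dn n).
Proof.
apply: allpairs_uniq; [exact: uniq_Mn | exact: enum_uniq |].
by move=> [a i] [b j] _ _ /= [-> ->].
Qed.

Lemma Pt_sub t x : Pt t x -> spanL (Dn (mdeg t.1)) x.
Proof.
apply: rspan_mono => _ [s st ->]; exists s => //.
by rewrite mem_Dn; apply: ltI_deg.
Qed.

Lemma Rv_sub t x : Rv t x -> spanL (Dn (mdeg t.1)) x.
Proof.
case=> r ->; case: (rspan_sub (fun y => exists2 u, u \in Dn (mdeg t.1) & y = v u)) => _ _.
apply; apply: rspan_gen; exists t => //; by rewrite mem_Dn.
Qed.

Lemma Pt_fin t : lam _ (Pt t) \is a fin_num.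
Proof. apply: (sub_fin _ (Dn (mdeg t.1))); [exact: rspan_sub | exact: Pt_sub]. Qed.

Lemma Rv_fin t : lam _ (Rv t) \is a fin_num.
Proof. apply: (sub_fin _ (Dn (mdeg t.1))); [exact: rline_sub | exact: Rv_sub]. Qed.

Lemma RvP_fin t : lam _ (fun x => Rv t x /\ Pt t x) \is a fin_num.
Proof.
apply: (sub_fin _ (Dn (mdeg t.1))); first exact: subI (rline_sub _) (rspan_sub _).
by move=> x [h _]; apply: Rv_sub.
Qed.

Lemma max_elt (s : seq idx) : s != [::] ->
  exists2 t, t \in s & forall u, u \in s -> u = t \/ ltI u t.
Proof.
elim: s => [//|a s IH] _.
case: (altP (s =P [::])) => [->|hs].
  by exists a; rewrite ?mem_head // => u; rewrite inE => /eqP; left.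
have [t ts ht] := IH hs.
case: (boolP (ltI a t)) => hat.
  exists t; first by rewrite inE ts orbT.
  by move=> u; rewrite inE => /orP[/eqP->|/ht]; [right | ].
exists a; first exact: mem_head.
have hta : t = a \/ ltI t a.
  case: (altP (t =P a)) => [->|hne]; first by left.
  by right; move: (ltI_total _ _ hne); rewrite (negbTE hat) orbF.
move=> u; rewrite inE => /orP[/eqP->|/ht [->|hut]]; first by left.
  by [].
case: hta => [<-|hta]; first by right.
by right; exact: ltI_trans _ _ _ hut hta.
Qed.

Lemma telescope n : forall s : seq idx, size s = n -> uniq s ->
  (forall t u, t \in s -> ltI u t -> u \in s) ->
  fine (lam _ (spanL s)) = \sum_(t <- s) cc t.
Proof.
elim: n => [|n IH] s hs us ds.
  case: s hs {us ds} => // _; rewrite big_nil.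
  rewrite (lzero _ _ (rspan_sub _)) // => x; split.
    by move/rspanP=> [p [hp ->]]; case: p hp => [|q p] hp; [rewrite big_nil | have [? ] := hp q (mem_head _ _)].
  by move=> ->; case: (rspan_sub (fun y : V => exists2 t, t \in [::] & y = v t)).
have hs0 : s != [::] by case: s hs {us ds}.
have [t ts tmax] := max_elt s hs0.
set s' := rem t s.
have hperm : perm_eq s (t :: s') by exact: perm_to_rem.
rewrite (perm_big _ hperm) big_cons.
have mem' : forall u, (u \in s') = (u \in s) && (u != t).
  by move=> u; rewrite /s' mem_rem_uniq // inE andbC.
have e1 : forall u, (u \in s') <-> ltI u t.
  move=> u; rewrite mem'; split.
    by case/andP=> /tmax [->|//]; rewrite eqxx.
  by move=> h; rewrite (ds t u ts h) /=; apply/negP => /eqP e; rewrite e ltI_irr in h.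
have IHs : fine (lam _ (spanL s')) = \sum_(u <- s') cc u.
  apply: IH.
  - by rewrite size_rem // hs.
  - exact: rem_uniq.
  - move=> a b /e1 hat hba; apply/e1; exact: ltI_trans _ _ _ hba hat.
have eP : forall x, spanL s' x <-> Pt t x.
  by apply: rspan_ext => y; split; case=> u /e1 hu ->; exists u.
have eS : forall x, spanL s x <-> ssum (Pt t) (Rv t) x.
  move=> x; apply: iff_trans (rspan_add1 (fun y => exists2 u, ltI u t & y = v u) (v t) x).
  apply: rspan_ext => y; split.
    case=> u us0 ->; case: (altP (u =P t)) => [->|hne]; first by right.
    by left; exists u => //; apply/e1; rewrite mem' us0 hne.
  case=> [[u /e1 hu ->]|->]; last by exists t.
  by exists u => //; move: hu; rewrite mem' => /andP[].
have lS := lext _ _ _ (rspan_sub _) (subS (rspan_sub _) (rline_sub _)) eS.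
have lP := lext _ _ _ (rspan_sub _) (rspan_sub _) eP.
have lI : lam _ (fun x => Pt t x /\ Rv t x) = lam _ (fun x => Rv t x /\ Pt t x).
  by apply: lext; [exact: subI (rspan_sub _) (rline_sub _) | exact: subI (rline_sub _) (rspan_sub _) | move=> x; split; case].
have hm := lmod _ _ _ (rspan_sub (fun y => exists2 u, ltI u t & y = v u)) (rline_sub (v t)).
rewrite -/(Pt t) -/(Rv t) in hm.
rewrite lS -IHs lP /cc.
have fS : lam _ (ssum (Pt t) (Rv t)) \is a fin_num.
  by rewrite -lS; apply: (sub_fin _ s); [exact: rspan_sub | done].
rewrite lI in hm.
rewrite -(fineK (Pt_fin t)) -(fineK (Rv_fin t)) -(fineK fS) -(fineK (RvP_fin t)) -!EFinD in hm.
have e := EFin_inj hm.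
apply: (addIr (fine (lam _ (fun x => Rv t x /\ Pt t x)))).
rewrite -e.
set a := fine (lam _ (Pt t)); set b := fine (lam _ (Rv t)).
set c := fine (lam _ (fun x => Rv t x /\ Pt t x)).
apply: (@eq_trans _ _ (b - c + a + c)); last by [].
ring.
Qed.

Section Shift.
Variable l : 'I_k.
Let T : {linear V -> V} := @Xm _ _ N U_(l)%MM.
Definition sh (t : idx) : idx := ((t.1 + U_(l))%MM, t.2).

Lemma Tv s : T (v s) = v (sh s).
Proof.
rewrite /T /v /Xm /sh /=.
change (('X_[U_(l)] : {mpoly R[k]}) *: (('X_[s.1] : {mpoly R[k]}) *: (g s.2 : N)) =
  ('X_[(s.1 + U_(l))%MM] : {mpoly R[k]}) *: (g s.2 : N)).
by rewrite scalerA mpolyXD mulrC.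
Qed.

Lemma TP t x : Pt t x -> Pt (sh t) (T x).
Proof.
move=> /(rspan_lin T) h; apply: (rspan_mono _ h).
move=> _ [_ [s st ->] ->]; exists (sh s); last exact: Tv.
by rewrite /sh ltI_shift.
Qed.

Lemma TRv t r : T (r *: v t) = r *: v (sh t).
Proof. by rewrite linearZZ Tv. Qed.

Lemma It_mono t r : It t r -> It (sh t) r.
Proof. by rewrite /It => /TP; rewrite TRv. Qed.

Lemma cc_shift t : (forall r, It (sh t) r -> It t r) -> cc t = cc (sh t).
Proof.
move=> hI.
have sA := rline_sub (v t).
have sAP : submodule (fun x => Rv t x /\ Pt t x) := subI sA (rspan_sub _).
have k1 := lker _ _ T _ sA.
have k2 := lker _ _ T _ sAP.
have e1 : forall x, (fun x => (Rv t x /\ Pt t x) /\ T x = 0) x <-> (fun x => Rv t x /\ T x = 0) x.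
  move=> x; split; first by case=> -[].
  case=> -[r ->] h0; split => //; split; first by exists r.
  apply: hI; rewrite /It -TRv h0.
  by case: (rspan_sub (fun y => exists2 s, ltI s (sh t) & y = v s)).
have e2 : forall y, (fun y => exists2 x, Rv t x & y = T x) y <-> Rv (sh t) y.
  move=> y; split; first by case=> _ [r ->] ->; exists r; rewrite TRv.
  by case=> r ->; exists (r *: v t); [exists r | rewrite TRv].
have e3 : forall y, (fun y => exists2 x, Rv t x /\ Pt t x & y = T x) y <->
    (fun y => Rv (sh t) y /\ Pt (sh t) y) y.
  move=> y; split.
    case=> _ [[r ->] hP] ->; rewrite TRv; split; first by exists r.
    by rewrite -TRv; apply: TP.
  case=> -[r ->] hP; exists (r *: v t); last by rewrite TRv.
  by split; [exists r | apply: hI].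
rewrite (lext _ _ _ (subker T sAP) (subker T sA) e1) in k2.
rewrite (lext _ _ _ (subimg T sA) (rline_sub _) e2) in k1.
rewrite (lext _ _ _ (subimg T sAP) (subI (rline_sub _) (rspan_sub _)) e3) in k2.
have fK : lam _ (fun x => Rv t x /\ T x = 0) \is a fin_num.
  apply: (sub_fin _ (Dn (mdeg t.1))); first exact: subker.
  by move=> x [h _]; apply: Rv_sub.
rewrite /cc k1 k2 !fineD //; last 2 first.
- exact: RvP_fin.
- exact: Rv_fin.
by rewrite opprD addrACA subrr add0r.
Qed.

End Shift.

Lemma It_sub t : submodule (M := R^o) (It t).
Proof.
rewrite /It; case: (rspan_sub (fun y => exists2 s, ltI s t & y = v s)) => P0 PD PZ.
split.
- by rewrite scale0r.
- by move=> x y hx hy; rewrite scalerDl; apply: PD.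
- by move=> r x hx; change (Pt t ((r * x) *: v t)); rewrite -scalerA; apply: PZ.
Qed.

Lemma Wn_span n x : SnV n V0 x <-> spanL (Dn n) x.
Proof.
split.
  apply: rspan_min; first exact: rspan_sub.
  move=> _ [p [w [hp hw ->]]].
  have [c ->] := (hg w).1 hw.
  rewrite {1}(mpolyE p).
  have -> : ((\sum_(mu <- msupp p) p@_mu *: 'X_[mu]) *: ((\sum_(i < m) c i *: g i : V) : N) : V) =
      \sum_(mu <- msupp p) \sum_(i < m) (p@_mu * c i) *: v (mu, i).
    rewrite scaler_suml; apply: eq_bigr => mu _.
    rewrite scaler_sumr; apply: eq_bigr => i _.
    rewrite /v /Xm !restr_scaleE /=.
    change ((p@_mu *: ('X_[mu] : {mpoly R[k]})) *: (mpolyC k (c i) *: (g i : N)) =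
      mpolyC k (p@_mu * c i) *: (('X_[mu] : {mpoly R[k]}) *: (g i : N))).
    rewrite !scalerA -mul_mpolyC mpolyCM; congr (_ *: _); ring.
  rewrite big_seq; apply: sub_big; first exact: rspan_sub.
  move=> mu hmu; apply: sub_big; first exact: rspan_sub.
  move=> i _; case: (rspan_sub (fun y => exists2 t, t \in Dn n & y = v t)) => _ _; apply.
  apply: rspan_gen; exists (mu, i) => //; rewrite mem_Dn /=.
  by apply: hp; rewrite -mcoeff_msupp.
apply: rspan_mono => _ [t tn ->].
exists 'X_[t.1], (g t.2); split => //; last exact: g_V0.
move=> mu; rewrite mcoeffX; have [<- _|_] := eqVneq t.1 mu.
  by move: tn; rewrite mem_Dn.
by rewrite eqxx.
Qed.

Lemma Wn_lam n : lam _ (SnV n V0) = lam _ (spanL (Dn n)).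
Proof. exact: (lext _ _ _ (rspan_sub _) (rspan_sub _) (Wn_span n)). Qed.

Lemma Wn_fin n : lam _ (SnV n V0) \is a fin_num.
Proof.
rewrite Wn_lam; apply: (sub_fin _ (Dn n)) => //; exact: rspan_sub.
Qed.

Lemma Wn_val n : fine (lam _ (SnV n V0)) =
  \sum_(j <- enum 'I_m) cumsum (hs k (fun a => cc (mk k a, j))) n.
Proof.
rewrite Wn_lam (telescope (size (Dn n)) (Dn n) erefl (uniq_Dn n)); last first.
  by move=> t u; rewrite !mem_Dn => ht /ltI_deg hu; apply: leq_trans hu ht.
rewrite /Dn big_allpairs /Mn big_map big_flatten big_map.
rewrite (eq_bigr (fun d => \sum_(j <- enum 'I_m) \sum_(a <- lists k d) cc (mk k a, j))); last first.
  by move=> d _; exact: exchange_big.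
rewrite exchange_big; apply: eq_bigr => j _.
by rewrite /cumsum -(big_mkord xpredT (hs k (fun a => cc (mk k a, j)))) /index_iota subn0.
Qed.

Lemma Ek_W : Ek k.+1 (fun n => fine (lam _ (SnV n V0))).
Proof.
apply: (Ek_ext (fun n => esym (Wn_val n))).
apply: Ek_big => j; apply: Ek_cumsum.
apply: (@CL RR (R -> Prop) (@ileR R) (fun I => submodule (M := R^o) I)
   (fun I r h => h) (fun I J K h1 h2 r hr => h2 r (h1 r hr)) (noeth_acc hN) k
   (fun a => cc (mk k a, j)) (fun a => It (mk k a, j))).
- by move=> a _; apply: It_sub.
- move=> a _ i hi r; rewrite mk_incr => h.
  exact: (It_mono (Ordinal hi) (mk k a, j) r h).
- move=> a _ i hi hle; rewrite mk_incr.
  apply: (cc_shift (Ordinal hi) (mk k a, j)) => r.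
  by rewrite /sh /= -mk_incr => /hle.
Qed.

End Main.


Unset Implicit Arguments.
Local Open Scope ring_scope.
Lemma series_dlt1 (RR : ringType) (a b : nat -> RR) :
  series_mul a (fun n => b n - (if n is n'.+1 then b n' else 0)) = dlt (series_mul a b).
Proof.
apply: functional_extensionality => n; rewrite /dlt /series_mul.
rewrite -[in RHS](big_mkord xpredT (fun i => a i * b (n - i)%N)).
case: n => [|n].
  by rewrite !big_ord1 subr0 subnn subr0 big_nat1 subnn.
rewrite [LHS]big_ord_recr /= subnn subr0.
rewrite big_mkord [X in _ = X - _]big_ord_recr /= subnn.
rewrite (eq_bigr (fun i : 'I_n.+1 => a i * b (n.+1 - i)%N - a i * b (n - i)%N)); last first.
  by move=> i _; rewrite /= subSn ?mulrBr //; exact: (ltn_ord i).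
by rewrite sumrB addrAC.
Qed.

Lemma series_dlt (RR : comRingType) (a : nat -> RR) j :
  series_mul a (fun n => ((1 - 'X) ^+ j : {poly RR})`_n) = iter j (@dlt RR) a.
Proof.
elim: j => [|j IH].
  apply: functional_extensionality => n; rewrite /series_mul expr0 /=.
  rewrite big_ord_recr /= subnn coef1 eqxx mulr1 big1 ?add0r // => i _.
  by rewrite coef1 subn_eq0 leqNgt ltn_ord mulr0.
rewrite iterS -IH -series_dlt1; congr series_mul.
apply: functional_extensionality => n.
by rewrite exprS mulrBl mul1r coefB coefXM; case: n.
Qed.

Theorem theorem4p9 (RR : realType) (R : comNzRingType) (k : nat)
    (lam : forall M : lmodType R, (M -> Prop) -> \bar RR)
    (N : lmodType ({mpoly R[k]})) (V0 : restr N -> Prop) :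
  noetherian R ->
  is_length_function lam ->
  submodule V0 -> fin_gen V0 -> (lam _ V0 < +oo)%E ->
  (forall n : nat, lam _ (SnV n V0) \is a fin_num) /\
  exists p : {poly RR},
    series_eq_frac (fun n : nat => fine (lam _ (SnV n V0))) p ((1 - 'X) ^+ k.+1).
Proof.
move=> hN hL sV0 [m [g hg]] finV0.
split; first by move=> n; exact: (Wn_fin RR R k lam N V0 hL sV0 finV0 m g hg n).
have [D HD] := Ek_W RR R k lam N V0 hN hL sV0 finV0 m g hg.
exists (\poly_(i < D) iter k.+1 (@dlt RR) (fun n => fine (lam _ (SnV n V0))) i).
rewrite /series_eq_frac series_dlt; apply: functional_extensionality => n.
rewrite coef_poly; case: ltnP => // h.
by rewrite HD.
Qed.
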